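(* (1) $Q^{1}_{\mathrm{Mon}}\mathrm{FO}(+,\times)\equiv Q^{\star}_{\mathrm{Mon}}\mathrm{FO}(+,\times)$. (2) $\mathrm{SOM}(Q^{1}_{\mathrm{Mon}},+,\times)\equiv\mathrm{SOM}(Q^{\star}_{\mathrm{Mon}},+,\times)$.
   Context: Strings as structures: a nonempty string $b_0\cdots b_{n-1}$ over the ordered alphabet $(a_1,\dots,a_s)$ is the structure with universe $\{0,\dots,n-1\}$, natural order $<$, and unary predicates $P_{a_i}=\{j:b_j=a_i\}$. FO uses $=$, $<$, these predicates, $\min,\max$, connectives, $\exists,\forall$; SOM adds unary second-order variables and quantifiers. ''$+,\times$'' means the ternary relations $i+j=k$ and $i\cdot j=k$ are additionally built in. Monadic second-order Lindström quantifiers: for a language $L$ over $(a_1,\dots,a_s)$ and distinct unary variables $\overline X=(X_1,\dots,X_k)$, over universe $\{0,\dots,n-1\}$ and an assignment $(A_1,\dots,A_k)$ let $s^i_j=1$ iff $j\in A_i$. For $Q^1_L$ the $2^{nk}$ assignments are ordered lexicographically by the interleaved code $s^1_0\cdots s^k_0s^1_1\cdots s^k_1\cdots s^1_{n-1}\cdots s^k_{n-1}$; for $Q^\star_L$ by the concatenated code $s^1_0\cdots s^1_{n-1}\cdots s^k_0\cdots s^k_{n-1}$. Then $\mathcal A\models Q\overline X[\varphi_1,\dots,\varphi_{s-1}]$ iff the word of length $2^{nk}$ whose $i$-th letter is $a_j$ for the least $j$ with $\varphi_j$ true at the $i$-th assignment (and $a_s$ if none) lies in $L$. A monoid is a finite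 set $M$ with an associative binary operation with identity; for $S\subseteq M$, the word-problem $\mathcal W(S,M)$ is the set of words over alphabet $M$ whose product lies in $S$. $Q^{1}_{\mathrm{Mon}}\mathrm{FO}(+,\times)$ (resp. $Q^{\star}_{\mathrm{Mon}}\mathrm{FO}(+,\times)$) consists of formulas $Q^1_L\overline X[\varphi_1,\dots,\varphi_{s-1}]$ (resp. with $Q^\star_L$), $L$ a monoid word-problem, $\varphi_i$ first-order with built-in $+,\times$. $\mathrm{SOM}(Q^{1}_{\mathrm{Mon}},+,\times)$ (resp. with $\star$) is SOM with built-in $+,\times$ closed under nested application of $Q^1_L$ (resp. $Q^\star_L$) for monoid word-problems $L$. $\mathcal L\equiv\mathcal L'$ means that over every string signature every sentence of either logic has an equivalent sentence of the other. *)

(* Defs.v *)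
From mathcomp Require Import all_boot.
Set Implicit Arguments. Unset Strict Implicit. Unset Printing Implicit Defensive.

Inductive term := TVar of nat | TMin | TMax.

Definition teval (n : nat) (fe : nat -> nat) (t : term) : nat :=
  match t with TVar x => fe x | TMin => 0 | TMax => n.-1 end.

(* Ordering of assignments used by a Lindstrom quantifier:
   Interleaved = Q^1, Concatenated = Q^star. *)
Inductive qmode := Interleaved | Concatenated.

(* Formulas over the string signature with alphabet (a_1,...,a_s) = 'I_s,
   with built-in + and x, unary second-order variables (named by nat) and
   monadic second-order Lindstrom quantifiers Q_L Xs [phi_1,...,phi_t]
   where L is a language over an alphabet of t+1 letters 'I_t.+1. *)
Inductive form (s : nat) : Type :=
| FEq of term & term
| FLt of term & term
| FLetter of 'I_s & term
| FSO of nat & term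
| FPlus of term & term & term
| FTimes of term & term & term
| FNot of form s
| FAnd of form s & form s
| FOr of form s & form s
| FEx of nat & form s
| FAll of nat & form s
| FSEx of nat & form s
| FSAll of nat & form s
| FQ (m : qmode) (t : nat) (L : pred (seq 'I_t.+1)) (Xs : seq nat)
     (phi : 'I_t -> form s).

Definition upd (fe : nat -> nat) (x v : nat) : nat -> nat :=
  fun y => if y == x then v else fe y.
Definition supd (se : nat -> nat -> bool) (X : nat) (A : nat -> bool) :=
  fun Y => if Y == X then A else se Y.

(* position (0-based) of the bit s^{i+1}_j in the code of an assignment *)
Definition code_pos (m : qmode) (k n i j : nat) : nat :=
  match m with
  | Interleaved => j * k + i
  | Concatenated => i * n + j
  end.

(* the r-th assignment (0-based, lexicographic order on codes of length n*k)
   to the variables Xs, installed in the second-order environment se *)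
Definition q_assign (m : qmode) (n : nat) (Xs : seq nat) (r : nat)
    (se : nat -> nat -> bool) : nat -> nat -> bool :=
  let k := size Xs in
  fun X j => if X \in Xs then
               (j < n) && odd (r %/ 2 ^ (n * k - (code_pos m k n (index X Xs) j).+1))
             else se X j.

(* universe {0,...,size w - 1}; subsets of it coded by r < 2^n *)
Fixpoint sat (s : nat) (w : seq 'I_s) (fe : nat -> nat) (se : nat -> nat -> bool)
    (f : form s) {struct f} : bool :=
  let n := size w in
  match f with
  | FEq t1 t2 => teval n fe t1 == teval n fe t2
  | FLt t1 t2 => teval n fe t1 < teval n fe t2
  | FLetter a t => nth s (map val w) (teval n fe t) == a
  | FSO X t => se X (teval n fe t)
  | FPlus t1 t2 t3 => teval n fe t1 + teval n fe t2 == teval n fe t3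
  | FTimes t1 t2 t3 => teval n fe t1 * teval n fe t2 == teval n fe t3
  | FNot g => ~~ sat w fe se g
  | FAnd g h => sat w fe se g && sat w fe se h
  | FOr g h => sat w fe se g || sat w fe se h
  | FEx x g => has (fun v => sat w (upd fe x v) se g) (iota 0 n)
  | FAll x g => all (fun v => sat w (upd fe x v) se g) (iota 0 n)
  | FSEx X g => has (fun r => sat w fe (supd se X (fun j => odd (r %/ 2 ^ j))) g)
                    (iota 0 (2 ^ n))
  | FSAll X g => all (fun r => sat w fe (supd se X (fun j => odd (r %/ 2 ^ j))) g)
                    (iota 0 (2 ^ n))
  | FQ m t L Xs phi =>
      L [seq (inord (find (fun i => sat w fe (q_assign m n Xs r se) (phi i))
                          (enum 'I_t)) : 'I_t.+1)
        | r <- iota 0 (2 ^ (n * size Xs))]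
  end.

Definition tclosed (bf : seq nat) (t : term) : bool :=
  if t is TVar x then x \in bf else true.

Fixpoint closedf (s : nat) (bf bs : seq nat) (f : form s) {struct f} : bool :=
  match f with
  | FEq t1 t2 | FLt t1 t2 => tclosed bf t1 && tclosed bf t2
  | FLetter _ t => tclosed bf t
  | FSO X t => (X \in bs) && tclosed bf t
  | FPlus t1 t2 t3 | FTimes t1 t2 t3 =>
      [&& tclosed bf t1, tclosed bf t2 & tclosed bf t3]
  | FNot g => closedf bf bs g
  | FAnd g h | FOr g h => closedf bf bs g && closedf bf bs h
  | FEx x g | FAll x g => closedf (x :: bf) bs g
  | FSEx X g | FSAll X g => closedf bf (X :: bs) g
  | FQ _ t _ Xs phi => all (fun i => closedf bf (Xs ++ bs) (phi i)) (enum 'I_t)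
  end.

Definition sentence (s : nat) (f : form s) : bool := closedf [::] [::] f.

Definition models (s : nat) (w : seq 'I_s) (f : form s) : bool :=
  sat w (fun _ => 0) (fun _ _ => false) f.

(* L over the alphabet 'I_t.+1 is W(S,M) for a finite monoid M whose
   underlying set is the alphabet itself. *)
Definition monoid_wp (t : nat) (L : pred (seq 'I_t.+1)) : Prop :=
  exists (op : 'I_t.+1 -> 'I_t.+1 -> 'I_t.+1) (e : 'I_t.+1) (S : {set 'I_t.+1}),
    [/\ associative op, left_id e op, right_id e op &
        forall u : seq 'I_t.+1, L u = (foldr op e u \in S)].

Fixpoint isFO (s : nat) (f : form s) : bool :=
  match f with
  | FNot g => isFO g
  | FAnd g h | FOr g h => isFO g && isFO h
  | FEx _ g | FAll _ g => isFO g
  | FSEx _ _ | FSAll _ _ | FQ _ _ _ _ _ => false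
  | _ => true
  end.

Definition isQFO (m : qmode) (s : nat) (f : form s) : Prop :=
  match f with
  | FQ m' t L Xs phi =>
      [/\ m' = m, monoid_wp L, uniq Xs, 0 < size Xs & forall i, isFO (phi i)]
  | _ => False
  end.

Fixpoint isSOMQ (m : qmode) (s : nat) (f : form s) {struct f} : Prop :=
  match f with
  | FNot g => isSOMQ m g
  | FAnd g h | FOr g h => isSOMQ m g /\ isSOMQ m h
  | FEx _ g | FAll _ g | FSEx _ g | FSAll _ g => isSOMQ m g
  | FQ m' t L Xs phi =>
      [/\ m' = m, monoid_wp L, uniq Xs, 0 < size Xs & forall i, isSOMQ m (phi i)]
  | _ => True
  end.

Definition equiv_logics (C1 C2 : forall s, form s -> Prop) : Prop :=
  forall s : nat,
    (forall f, C1 s f -> sentence f ->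
       exists g, [/\ C2 s g, sentence g &
                  forall w : seq 'I_s, 0 < size w -> models w f = models w g]) /\
    (forall g, C2 s g -> sentence g ->
       exists f, [/\ C1 s f, sentence f &
                  forall w : seq 'I_s, 0 < size w -> models w f = models w g]).

(* Main.v *)
Require Import Defs.
From mathcomp Require Import all_boot zify.
From Stdlib Require Import FunctionalExtensionality.
Set Implicit Arguments. Unset Strict Implicit. Unset Printing Implicit Defensive.

Arguments FEq {s}. Arguments FLt {s}. Arguments FLetter {s}. Arguments FSO {s}.
Arguments FPlus {s}. Arguments FTimes {s}.


Lemma arith_step n h T V inc : 0 < n -> T < n -> inc <= n ->
  (exists2 Y, Y < n & ((h*n+Y == V) && (Y+inc == T)) || ((0<h) && ((h-1)*n + Y == V) && (Y + inc == T+n)))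
  <-> h*n+T = V+inc.
Proof.
move=> n0 Tn i1; split.
- move=> [Y Yn /orP[/andP[/eqP H1 /eqP H2]|/andP[/andP[H0 /eqP H1] /eqP H2]]]; nia.
- move=> E. case: (leqP inc T) => HT.
  + exists (T - inc); first lia. apply/orP; left; apply/andP; split; apply/eqP; lia.
  + exists (T + n - inc); first lia. apply/orP; right.
    have h0 : 0 < h by nia.
    rewrite h0 /=; apply/andP; split; apply/eqP; nia.
Qed.

Section Build.
Variable s : nat.
Local Notation form := (form s).

Definition FFalse : form := FLt TMin TMin.
Definition bigOr (l : seq form) : form := foldr (@FOr s) FFalse l.

Lemma sat_bigOr w fe se l : sat w fe se (bigOr l) = has (sat w fe se) l.
Proof. by elim: l => //= f l ->. Qed.

Lemma upd_eq fe x v : upd fe x v x = v.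
Proof. by rewrite /upd eqxx. Qed.
Lemma upd_ne fe x v y : y != x -> upd fe x v y = fe y.
Proof. by rewrite /upd => /negbTE ->. Qed.

Definition Succ (a b v : nat) : form :=
  FAnd (FLt (TVar a) (TVar b))
       (FAll v (FNot (FAnd (FLt (TVar a) (TVar v)) (FLt (TVar v) (TVar b))))).

Lemma sat_Succ w fe se a b v : a != v -> b != v -> fe b < size w ->
  sat w fe se (Succ a b v) = ((fe a).+1 == fe b).
Proof.
move=> av bv bn /=.
rewrite (eq_all (a2 := fun x => ~~ ((fe a < x) && (x < fe b)))); last first.
  by move=> x; rewrite /= !upd_eq !upd_ne.
apply/andP/eqP.
- move=> [ab /allP H].
  have : ~~ ((fe a).+1 < fe b).
    apply/negP => lt; have := H (fe a).+1; rewrite mem_iota add0n ltnSn lt /=.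
    by move=> /(_ (leq_ltn_trans (ltnW lt) bn)).
  move=> ?; lia.
- move=> E; split; first by rewrite -E.
  apply/allP => x _; apply/negP => /andP[h1 h2]; lia.
Qed.

Opaque Succ.
Ltac updsimp := rewrite /upd; repeat match goal with |- context [@eq_op _ ?a ?b] =>
   (have -> : (a == b) = false by apply/eqP; lia) || (have -> : (a == b) = true by apply/eqP; lia) end.

Definition Add (st carry : bool) (c y tn : nat) : form :=
  if st then
    if carry then FEx y.+1 (FEx y.+2 (FAnd (FPlus (TVar y) (TVar y.+1) TMax)
                    (FAnd (FPlus (TVar tn) (TVar y.+1) (TVar y.+2)) (Succ y.+2 c y.+3))))
    else FPlus (TVar y) (TVar c) (TVar tn)
  else if carry then FAnd (FEq (TVar y) TMax) (FEq (TVar tn) TMin)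
  else Succ y tn y.+3.

Lemma sat_Add w fe se st carry c y tn : 0 < size w -> fe y < size w -> fe c < size w ->
  fe tn < size w -> c < y -> (tn < y) || (y.+3 < tn) ->
  sat w fe se (Add st carry c y tn) =
  (fe y + (if st then fe c else 1) == fe tn + carry * size w).
Proof.
move=> n0 Yn Cn Tn cy ty; set n := size w.
case: st; case: carry => /=.
- rewrite (eq_has (a2 := fun E => has (fun U => (fe y + E == n.-1) && ((fe tn + E == U) && (U.+1 == fe c))) (iota 0 n))); last first.
    move=> E /=; apply: eq_has => U /=; rewrite sat_Succ; last first.
    + updsimp; done.
    + apply/eqP; lia.
    + apply/eqP; lia.
    + by updsimp.
  apply/hasP/eqP.
  + move=> [E _ /hasP [U _ /andP[/eqP h1 /andP[/eqP h2 /eqP h3]]]]; lia.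
  + move=> E; exists (n.-1 - fe y); first by rewrite mem_iota; lia.
    apply/hasP; exists (fe c).-1; first by rewrite mem_iota; lia.
    apply/andP; split; first (apply/eqP; lia).
    apply/andP; split; apply/eqP; lia.
- rewrite mul0n addn0; done.
- apply/andP/eqP.
  + move=> [/eqP h1 /eqP h2]; lia.
  + move=> h; split; apply/eqP; lia.
- rewrite sat_Succ; first (rewrite mul0n addn0 addn1; done).
  + apply/eqP; lia.
  + apply/eqP; lia.
  + done.
Qed.

Opaque Add.

Fixpoint R (c base : nat) (ss : seq bool) (h tn : nat) : form :=
  match ss with
  | [::] => if h is 0 then FEq (TVar tn) TMin else FFalse
  | st :: ss' => let y := base + 4 * size ss' in
     FEx y (FOr (FAnd (R c base ss' h y) (Add st false c y tn))
                (if h is h'.+1 then FAnd (R c base ss' h' y) (Add st true c y tn) else FFalse))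
  end.

Definition val (C : nat) (ss : seq bool) := C * count id ss + count negb ss.

Lemma sat_R w se c base ss : forall h tn fe, 0 < size w -> c < base ->
  (tn < base) || (base + 4 * size ss <= tn) -> fe c < size w -> fe tn < size w ->
  sat w fe se (R c base ss h tn) = (h * size w + fe tn == val (fe c) ss).
Proof.
set n := size w.
elim: ss => [|st ss IH] h tn fe n0 cb tb Cn Tn.
  case: h => [|h] /=; rewrite /val /= ?muln0 //.
  apply/esym/negbTE; rewrite -lt0n; lia.
set y := base + 4 * size ss.
set V := val (fe c) ss; set inc := if st then fe c else 1.
have tnb : (tn < y) || (y.+3 < tn) by move: tb; rewrite /y /=; lia.
rewrite /= (eq_in_has (a2 := fun Y => ((h*n+Y == V) && (Y+inc == fe tn)) ||
     ((0<h) && ((h-1)*n + Y == V) && (Y + inc == fe tn + n)))); last first.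
  move=> Y; rewrite mem_iota add0n => Yn.
  have E1 : upd fe y Y c = fe c by rewrite upd_ne //; apply/eqP; lia.
  have E2 : upd fe y Y tn = fe tn by rewrite upd_ne //; apply/eqP; lia.
  case: h => [|h] /=.
  - rewrite IH ?upd_eq ?E1 //; try lia.
    rewrite sat_Add ?upd_eq ?E1 ?E2 //; try lia.
  - rewrite !IH ?upd_eq ?E1 //; try lia.
    rewrite !sat_Add ?upd_eq ?E1 ?E2 //; try lia.
have -> : val (fe c) (st :: ss) = V + inc.
  by rewrite /V /inc /val /=; case: (st) => /=; lia.
apply/hasP/eqP.
- move=> [Y]; rewrite mem_iota add0n => Yn HY; apply/(arith_step h V n0 Tn); first by rewrite /inc; case: (st); lia.
  by exists Y.
- move/(arith_step h V n0 Tn) => H. case: H; first by rewrite /inc; case: (st); lia.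
  by move=> Y Yn HY; exists Y; rewrite // mem_iota.
Qed.

Opaque R.

Definition other (m : qmode) := match m with Interleaved => Concatenated | Concatenated => Interleaved end.
Definition rel k n m0 i j i' j' := code_pos (other m0) k n i' j' == code_pos m0 k n i j.

Definition EqF m0 k z i i' : form :=
  match m0 with
  | Interleaved => R z z.+2 (nseq i false ++ nseq k true) i' z.+1
  | Concatenated => R z.+1 z.+2 (nseq i' false ++ nseq k true) i z
  end.

Lemma val_nseq C a k : val C (nseq a false ++ nseq k true) = C * k + a.
Proof. by rewrite /val !count_cat !count_nseq /=; lia. Qed.

Lemma sat_EqF w fe se m0 k z i i' : 0 < size w -> fe z < size w -> fe z.+1 < size w ->
  sat w fe se (EqF m0 k z i i') = rel k (size w) m0 i (fe z) i' (fe z.+1).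
Proof.
move=> n0 h1 h2; case: m0 => /=.
- rewrite sat_R // ?val_nseq /rel /=; [by rewrite mulnC | lia].
- rewrite sat_R // ?val_nseq /rel /=; [by rewrite eq_sym mulnC | lia].
Qed.

Definition Thp m0 k N' z i : form :=
  bigOr [seq FEx z.+1 (FAnd (EqF m0 k z i i') (FSO (N' + i') (TVar z.+1))) | i' <- iota 0 k].

Definition Aset m0 k N' n (se : nat -> nat -> bool) i : nat -> bool :=
  fun j => (j < n) && has (fun i' => has (fun j' => rel k n m0 i j i' j' && se (N' + i') j')
                                      (iota 0 n)) (iota 0 k).

Lemma sat_Thp w fe se m0 k N' z i : 0 < size w -> fe z < size w ->
  sat w fe se (Thp m0 k N' z i) =
  has (fun i' => has (fun j' => rel k (size w) m0 i (fe z) i' j' && se (N' + i') j')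
                 (iota 0 (size w))) (iota 0 k).
Proof.
move=> n0 zn; rewrite sat_bigOr has_map; apply: eq_has => i' /=.
apply: eq_in_has => j'; rewrite mem_iota add0n => jn /=.
rewrite sat_EqF ?upd_eq ?upd_ne //; by rewrite ?neq_ltn ?ltnSn ?orbT // upd_ne ?neq_ltn ?ltnSn ?orbT.
Qed.

Definition tm (t : term) := if t is TVar x then x else 0.

Lemma teval_upd n fe x v t : tm t < x -> teval n (upd fe x v) t = teval n fe t.
Proof. by case: t => //= y yx; rewrite upd_ne // neq_ltn yx. Qed.

Definition Th m0 k N' z i (t : term) : form :=
  FEx z (FAnd (FEq (TVar z) t) (Thp m0 k N' z i)).

Lemma has_eqv (P : pred nat) n T : has (fun v => (v == T) && P v) (iota 0 n) = (T < n) && P T.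
Proof.
apply/hasP/andP.
- by move=> [v]; rewrite mem_iota add0n => vn /andP[/eqP <-].
- by move=> [Tn PT]; exists T; rewrite ?mem_iota ?eqxx.
Qed.

Lemma sat_Th w fe se m0 k N' z i t : 0 < size w -> tm t < z ->
  sat w fe se (Th m0 k N' z i t) = Aset m0 k N' (size w) se i (teval (size w) fe t).
Proof.
move=> n0 tz /=.
rewrite (eq_in_has (a2 := fun v => (v == teval (size w) fe t) &&
   has (fun i' => has (fun j' => rel k (size w) m0 i v i' j' && se (N' + i') j')
                 (iota 0 (size w))) (iota 0 k))).
  by rewrite has_eqv.
move=> v; rewrite mem_iota add0n => vn.
by rewrite upd_eq teval_upd // sat_Thp ?upd_eq.
Qed.

Opaque Th.


Fixpoint maxF (f : form) : nat :=
  match f with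
  | FEq t1 t2 | FLt t1 t2 => maxn (tm t1) (tm t2)
  | FLetter _ t | FSO _ t => tm t
  | FPlus t1 t2 t3 | FTimes t1 t2 t3 => maxn (tm t1) (maxn (tm t2) (tm t3))
  | FNot g => maxF g
  | FAnd g h | FOr g h => maxn (maxF g) (maxF h)
  | FEx x g | FAll x g => maxn x (maxF g)
  | FSEx _ g | FSAll _ g => maxF g
  | FQ _ t _ _ phi => \max_(i < t) maxF (phi i)
  end.

Fixpoint maxS (f : form) : nat :=
  match f with
  | FSO X _ => X
  | FNot g => maxS g
  | FAnd g h | FOr g h => maxn (maxS g) (maxS h)
  | FEx _ g | FAll _ g => maxS g
  | FSEx X g | FSAll X g => maxn X (maxS g)
  | FQ _ t _ Zs phi => maxn (\max_(x <- Zs) x) (\max_(i < t) maxS (phi i))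
  | _ => 0
  end.

Section Subst.
Variables (Xs : seq nat) (m0 : qmode) (N' z : nat).
Local Notation k := (size Xs).

Fixpoint subst (act : seq nat) (f : form) : form :=
  match f with
  | FSO X t => if X \in act then Th m0 k N' z (index X Xs) t else FSO X t
  | FNot g => FNot (subst act g)
  | FAnd g h => FAnd (subst act g) (subst act h)
  | FOr g h => FOr (subst act g) (subst act h)
  | FEx x g => FEx x (subst act g)
  | FAll x g => FAll x (subst act g)
  | FSEx X g => FSEx X (subst [seq Y <- act | Y != X] g)
  | FSAll X g => FSAll X (subst [seq Y <- act | Y != X] g)
  | FQ m t L Zs phi => FQ m L Zs (fun i => subst [seq Y <- act | Y \notin Zs] (phi i))
  | f => f
  end.

Definition env n (act : seq nat) (se : nat -> nat -> bool) : nat -> nat -> bool :=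
  fun X => if X \in act then Aset m0 k N' n se (index X Xs) else se X.

Lemma Aset_ext n se1 se2 i : (forall i', i' < k -> se1 (N' + i') = se2 (N' + i')) ->
  Aset m0 k N' n se1 i = Aset m0 k N' n se2 i.
Proof.
move=> H; apply: functional_extensionality => j; rewrite /Aset; congr andb.
apply: eq_in_has => i'; rewrite mem_iota add0n => /H ->; done.
Qed.

Lemma sat_subst w f : forall act fe se, 0 < size w -> maxF f < z -> maxS f < N' ->
  sat w fe se (subst act f) = sat w fe (env (size w) act se) f.
Proof.
elim: f => //=.
- move=> X t act fe se n0 tz XN; rewrite /env; case: ifP => // _.
  by rewrite sat_Th.
- by move=> g IH act fe se n0 h1 h2; rewrite IH.
- move=> g IHg h IHh act fe se n0; rewrite !gtn_max => /andP[? ?] /andP[? ?].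
  by rewrite IHg ?IHh.
- move=> g IHg h IHh act fe se n0; rewrite !gtn_max => /andP[? ?] /andP[? ?].
  by rewrite IHg ?IHh.
- move=> x g IH act fe se n0; rewrite !gtn_max => /andP[? ?] ?.
  by apply: eq_has => v; rewrite IH.
- move=> x g IH act fe se n0; rewrite !gtn_max => /andP[? ?] ?.
  by apply: eq_all => v; rewrite IH.
- move=> X g IH act fe se n0 ?; rewrite !gtn_max => /andP[? ?].
  apply: eq_has => r; rewrite IH //; congr sat.
  apply: functional_extensionality => Y; rewrite /env /supd mem_filter.
  case: eqP => [->|_] //=; case: ifP => // _; apply: Aset_ext => i' _.
  rewrite ifN //; apply/eqP; lia.
- move=> X g IH act fe se n0 ?; rewrite !gtn_max => /andP[? ?].
  apply: eq_all => r; rewrite IH //; congr sat.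
  apply: functional_extensionality => Y; rewrite /env /supd mem_filter.
  case: eqP => [->|_] //=; case: ifP => // _; apply: Aset_ext => i' _.
  rewrite ifN //; apply/eqP; lia.
- move=> m t L Zs phi IH act fe se n0 hF; rewrite gtn_max => /andP[hZ hS].
  congr (L _); apply: eq_map => r; congr inord; apply: eq_find => i.
  rewrite IH //; last first.
    - by apply: leq_ltn_trans hS; apply: leq_bigmax.
    - by apply: leq_ltn_trans hF; apply: leq_bigmax.
  congr sat; apply: functional_extensionality => Y; apply: functional_extensionality => j.
  rewrite /env /q_assign mem_filter.
  case: (boolP (Y \in Zs)) => YZ //=.
  case: ifP => // _; rewrite (@Aset_ext _ _ se) // => i' _.
  apply: functional_extensionality => j'.
  rewrite ifN //; apply/negP => H.
  have : N' + i' <= \max_(x <- Zs) x := @leq_bigmax_seq _ Zs predT id _ H isT.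
  lia.
Qed.

End Subst.

Lemma sat_coinc w f : forall fe se1 se2, (forall X, X <= maxS f -> se1 X = se2 X) ->
  sat w fe se1 f = sat w fe se2 f.
Proof.
elim: f => //=.
- by move=> X t fe se1 se2 H; rewrite H.
- by move=> g IH fe se1 se2 H; rewrite (IH _ _ se2).
- move=> g IHg h IHh fe se1 se2 H; rewrite (IHg _ _ se2) ?(IHh _ _ se2) // => X XS; apply: H;
  by rewrite leq_max XS ?orbT.
- move=> g IHg h IHh fe se1 se2 H; rewrite (IHg _ _ se2) ?(IHh _ _ se2) // => X XS; apply: H;
  by rewrite leq_max XS ?orbT.
- by move=> x g IH fe se1 se2 H; apply: eq_has => v; rewrite (IH _ _ se2).
- by move=> x g IH fe se1 se2 H; apply: eq_all => v; rewrite (IH _ _ se2).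
- move=> X g IH fe se1 se2 H; apply: eq_has => r; apply: IH => Y YS; rewrite /supd.
  case: eqP => // _; apply: H; rewrite leq_max YS orbT //.
- move=> X g IH fe se1 se2 H; apply: eq_all => r; apply: IH => Y YS; rewrite /supd.
  case: eqP => // _; apply: H; rewrite leq_max YS orbT //.
- move=> m t L Zs phi IH fe se1 se2 H.
  congr (L _); apply: eq_map => r; congr inord; apply: eq_find => i.
  apply: IH => Y YS; apply: functional_extensionality => j; rewrite /q_assign; case: ifP => // _; rewrite H //.
  rewrite leq_max; apply/orP; right; apply: leq_trans YS _; exact: leq_bigmax.
Qed.

Lemma pos_exists m0 k n i j : i < k -> j < n ->
  exists i', exists j', [/\ i' < k, j' < n & code_pos (other m0) k n i' j' = code_pos m0 k n i j].
Proof.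
move=> ik jn; case: m0 => /=.
- exists ((j * k + i) %/ n), ((j * k + i) %% n); split.
  + rewrite ltn_divLR; nia.
  + rewrite ltn_pmod //; lia.
  + by rewrite /= -divn_eq.
- exists ((i * n + j) %% k), ((i * n + j) %/ k); split.
  + rewrite ltn_pmod //; lia.
  + rewrite ltn_divLR; nia.
  + by rewrite /= -divn_eq.
Qed.

Lemma Aset_bit m0 (Xs : seq nat) N' n r se i : i < size Xs ->
  Aset m0 (size Xs) N' n (q_assign (other m0) n (iota N' (size Xs)) r se) i =
  fun j => (j < n) && odd (r %/ 2 ^ (n * size Xs - (code_pos m0 (size Xs) n i j).+1)).
Proof.
move=> ik; apply: functional_extensionality => j; rewrite /Aset.
case jn: (j < n) => //=.
set k := size Xs.
have qa : forall i', i' < k -> forall j', q_assign (other m0) n (iota N' k) r se (N' + i') j' =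
   (j' < n) && odd (r %/ 2 ^ (n * k - (code_pos (other m0) k n i' j').+1)).
  move=> i' i'k j'; rewrite /q_assign mem_iota leq_addr /= ltn_add2l i'k size_iota.
  have -> : index (N' + i') (iota N' k) = i'.
    by rewrite -{1}(nth_iota 0 N' i'k) index_uniq ?size_iota ?iota_uniq.
  done.
apply/hasP/idP.
- move=> [i']; rewrite mem_iota add0n => i'k /hasP [j' _ /andP [/eqP E]].
  by rewrite qa // E => /andP[_ ->].
- move=> B; have [i' [j' [i'k j'n E]]] := pos_exists m0 ik jn.
  exists i'; first by rewrite mem_iota.
  apply/hasP; exists j'; first by rewrite mem_iota.
  by rewrite /rel E eqxx /= qa // j'n E.
Qed.

Definition trq (m0 m' : qmode) := match m0, m' with
  | Interleaved, Concatenated | Concatenated, Interleaved => true | _, _ => false end.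

Lemma trqP m0 m' : trq m0 m' -> m' = other m0.
Proof. by case: m0; case: m'. Qed.

Definition transQ (m0 m' : qmode) t (L : pred (seq 'I_t.+1)) (Xs : seq nat) (psi : 'I_t -> form) : form :=
  if trq m0 m' then
    let z := (\max_(i < t) maxF (psi i)).+1 in
    let N' := (\max_(i < t) maxS (psi i)).+1 in
    FQ m' L (iota N' (size Xs)) (fun i => subst Xs m0 N' z Xs (psi i))
  else FQ m0 L Xs psi.

Fixpoint T (m' : qmode) (f : form) : form :=
  match f with
  | FNot g => FNot (T m' g)
  | FAnd g h => FAnd (T m' g) (T m' h)
  | FOr g h => FOr (T m' g) (T m' h)
  | FEx x g => FEx x (T m' g)
  | FAll x g => FAll x (T m' g)
  | FSEx X g => FSEx X (T m' g)
  | FSAll X g => FSAll X (T m' g)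
  | FQ m0 t L Xs phi => transQ m0 m' L Xs (fun i => T m' (phi i))
  | f => f
  end.

Lemma sat_transQ w fe se m0 m' t L Xs (psi phi : 'I_t -> form) : 0 < size w ->
  (forall i fe se, sat w fe se (psi i) = sat w fe se (phi i)) ->
  sat w fe se (transQ m0 m' L Xs psi) = sat w fe se (FQ m0 L Xs phi).
Proof.
move=> n0 IH; rewrite /transQ; case: ifP => tr /=; last first.
  by congr (L _); apply: eq_map => r; congr inord; apply: eq_find => i; rewrite IH.
have -> := trqP tr.
rewrite size_iota.
set z := (\max_(i < t) maxF (psi i)).+1.
set N' := (\max_(i < t) maxS (psi i)).+1.
congr (L _); apply: eq_map => r; congr inord; apply: eq_find => i.
rewrite sat_subst //; last first.
  - by rewrite ltnS; apply: leq_bigmax.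
  - by rewrite ltnS; apply: leq_bigmax.
rewrite -IH; apply: sat_coinc => X XS.
apply: functional_extensionality => j.
rewrite /env; case: ifP => XX.
- rewrite Aset_bit ?index_mem // /q_assign XX //.
- rewrite /q_assign XX mem_iota ifN //.
  have : X < N' by rewrite /N' ltnS; apply: leq_trans XS _; apply: leq_bigmax.
  by move=> h; apply/negP => /andP[h1 _]; move: h1; rewrite leqNgt h.
Qed.

Lemma sat_T w m' f : 0 < size w -> forall fe se, sat w fe se (T m' f) = sat w fe se f.
Proof.
move=> n0; elim: f => //=.
- by move=> g IH fe se; rewrite IH.
- by move=> g IHg h IHh fe se; rewrite IHg IHh.
- by move=> g IHg h IHh fe se; rewrite IHg IHh.
- by move=> x g IH fe se; apply: eq_has => v; rewrite IH.
- by move=> x g IH fe se; apply: eq_all => v; rewrite IH.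
- by move=> X g IH fe se; apply: eq_has => v; rewrite IH.
- by move=> X g IH fe se; apply: eq_all => v; rewrite IH.
- by move=> m t L Xs phi IH fe se; apply: sat_transQ.
Qed.
Transparent Succ Add R Th.

Lemma tclosed_mono bf bf' t : {subset bf <= bf'} -> tclosed bf t -> tclosed bf' t.
Proof. by case: t => //= x H /H. Qed.

Lemma closed_mono (f : form) : forall bf bs bf' bs', {subset bf <= bf'} -> {subset bs <= bs'} ->
  closedf bf bs f -> closedf bf' bs' f.
Proof.
elim: f => /=.
- by move=> t1 t2 bf bs bf' bs' H _ /andP[h1 h2]; rewrite (tclosed_mono H h1) (tclosed_mono H h2).
- by move=> t1 t2 bf bs bf' bs' H _ /andP[h1 h2]; rewrite (tclosed_mono H h1) (tclosed_mono H h2).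
- by move=> a t1 bf bs bf' bs' H _ h1; rewrite (tclosed_mono H h1).
- by move=> X t1 bf bs bf' bs' H H' /andP[X1 h1]; rewrite (H' _ X1) (tclosed_mono H h1).
- by move=> t1 t2 t3 bf bs bf' bs' H _ /and3P[h1 h2 h3]; rewrite (tclosed_mono H h1) (tclosed_mono H h2) (tclosed_mono H h3).
- by move=> t1 t2 t3 bf bs bf' bs' H _ /and3P[h1 h2 h3]; rewrite (tclosed_mono H h1) (tclosed_mono H h2) (tclosed_mono H h3).
- by move=> g IH bf bs bf' bs' H H'; apply: IH.
- by move=> g IHg h IHh bf bs bf' bs' H H' /andP[h1 h2]; rewrite (IHg bf bs) // (IHh bf bs).
- by move=> g IHg h IHh bf bs bf' bs' H H' /andP[h1 h2]; rewrite (IHg bf bs) // (IHh bf bs).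
- move=> x g IH bf bs bf' bs' H H'; apply: IH => // y; rewrite !inE => /orP[->//|/H ->];
  by rewrite orbT.
- move=> x g IH bf bs bf' bs' H H'; apply: IH => // y; rewrite !inE => /orP[->//|/H ->];
  by rewrite orbT.
- move=> X g IH bf bs bf' bs' H H'; apply: IH => // y; rewrite !inE => /orP[->//|/H' ->];
  by rewrite orbT.
- move=> X g IH bf bs bf' bs' H H'; apply: IH => // y; rewrite !inE => /orP[->//|/H' ->];
  by rewrite orbT.
- move=> m t L Xs phi IH bf bs bf' bs' H H' /allP A; apply/allP => i _.
  apply: (IH i bf (Xs ++ bs)) => //; last exact: A (mem_enum _ i).
  by move=> y; rewrite !mem_cat => /orP[->//|/H' ->]; rewrite orbT.
Qed.

Lemma closed_bigOr bf bs (l : seq form) : all (closedf bf bs) l -> closedf bf bs (bigOr l).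
Proof. by elim: l => //= g l IH /andP[-> /IH]. Qed.

Lemma closed_Add bf bs st carry c y tn : c \in bf -> y \in bf -> tn \in bf ->
  closedf bf bs (Add st carry c y tn).
Proof.
move=> hc hy ht; case: st; case: carry; rewrite /= ?inE ?eqxx ?hc ?hy ?ht ?orbT //.
Qed.

Lemma closed_R bs c base ss : forall h tn bf, c \in bf -> tn \in bf ->
  closedf bf bs (R c base ss h tn).
Proof.
elim: ss => [|st ss IH] h tn bf hc ht /=; first by case: h => //=; rewrite ht.
set y := base + 4 * size ss.
have hc' : c \in y :: bf by rewrite inE hc orbT.
have hy : y \in y :: bf by rewrite inE eqxx.
have ht' : tn \in y :: bf by rewrite inE ht orbT.
rewrite IH // closed_Add //=.
by case: h => //= h; rewrite IH // closed_Add.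
Qed.

Lemma closed_Th bf bs m0 k N' z i t : tclosed bf t -> (forall i', i' < k -> N' + i' \in bs) ->
  closedf bf bs (Th m0 k N' z i t).
Proof.
move=> ht hY /=; rewrite inE eqxx /= (tclosed_mono _ ht); last first.
  by move=> x xb; rewrite inE xb orbT.
apply: closed_bigOr; rewrite all_map; apply/allP => i'; rewrite mem_iota add0n => i'k /=.
rewrite hY // inE eqxx andbT.
case: m0; apply: closed_R; rewrite !inE eqxx ?orbT //.
Qed.

Lemma closed_subst Xs m0 N' z (f : form) : forall act bf bs0 bs, closedf bf bs0 f ->
  (forall X, X \in bs0 -> (X \in act) || (X \in bs)) ->
  (forall i', i' < size Xs -> N' + i' \in bs) ->
  closedf bf bs (subst Xs m0 N' z act f).
Proof.
elim: f => [t1 t2|t1 t2|a t1|X t1|t1 t2 t3|t1 t2 t3|g IH|g IHg h IHh|g IHg h IHh|x g IH|x g IH|X g IH|X g IH|m t L Zs phi IH] act bf bs0 bs /=.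
- by move=> C _ _.
- by move=> C _ _.
- by move=> C _ _.
- move=> /andP[Xb tb] H HY; case: ifP => XA.
  + exact: closed_Th.
  + by move: (H X Xb); rewrite XA /= => ->.
- by move=> C _ _.
- by move=> C _ _.
- by move=> C H HY; exact: (IH _ _ bs0 _ C H HY).
- by move=> /andP[C1 C2] H HY; rewrite (IHg _ _ bs0) // (IHh _ _ bs0).
- by move=> /andP[C1 C2] H HY; rewrite (IHg _ _ bs0) // (IHh _ _ bs0).
- by move=> C H HY; exact: (IH _ _ bs0 _ C H HY).
- by move=> C H HY; exact: (IH _ _ bs0 _ C H HY).
- move=> C H HY; apply: (IH _ _ (X :: bs0) _ C).
    move=> Y; rewrite !inE mem_filter; case: eqP => //= _ /H; by case/orP => ->; rewrite ?orbT.
  by move=> i' /HY h; rewrite inE h orbT.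
- move=> C H HY; apply: (IH _ _ (X :: bs0) _ C).
    move=> Y; rewrite !inE mem_filter; case: eqP => //= _ /H; by case/orP => ->; rewrite ?orbT.
  by move=> i' /HY h; rewrite inE h orbT.
- move=> /allP C H HY; apply/allP => i _.
  apply: (IH i _ _ (Zs ++ bs0)); first exact: C (mem_enum _ i).
    move=> Y; rewrite !mem_cat mem_filter; case: (boolP (Y \in Zs)) => //= _ /H; by case/orP => ->; rewrite ?orbT.
  by move=> i' /HY h; rewrite mem_cat h orbT.
Qed.

Lemma closed_T m' (f : form) : forall bf bs, closedf bf bs f -> closedf bf bs (T m' f).
Proof.
elim: f => [t1 t2|t1 t2|a t1|X t1|t1 t2 t3|t1 t2 t3|g IH|g IHg h IHh|g IHg h IHh|x g IH|x g IH|X g IH|X g IH|m0 t L Xs phi IH] bf bs /=; try done.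
- exact: IH.
- by move=> /andP[h1 h2]; rewrite IHg // IHh.
- by move=> /andP[h1 h2]; rewrite IHg // IHh.
- exact: IH.
- exact: IH.
- exact: IH.
- exact: IH.
- move=> /allP C; rewrite /transQ; case: ifP => _ /=; apply/allP => i _.
  + apply: (@closed_subst Xs m0 _ _ _ _ _ (Xs ++ bs)); first by apply: IH; exact: C (mem_enum _ i).
      by move=> X; rewrite !mem_cat => /orP[->//|->]; rewrite !orbT.
    by move=> i' i'k; rewrite mem_cat mem_iota leq_addr ltn_add2l i'k.
  + by apply: IH; exact: C (mem_enum _ i).
Qed.

Lemma isFO_bigOr (l : seq form) : all (@isFO s) l -> isFO (bigOr l).
Proof. by elim: l => //= g l IH /andP[-> /IH]. Qed.

Lemma isFO_Add st carry c y tn : isFO (Add st carry c y tn).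
Proof. by case: st; case: carry. Qed.

Lemma isFO_R c base ss : forall h tn, isFO (R c base ss h tn).
Proof.
elim: ss => [|st ss IH] h tn /=; first by case: h.
by rewrite IH isFO_Add; case: h => //= h; rewrite IH isFO_Add.
Qed.

Lemma isFO_Th m0 k N' z i t : isFO (Th m0 k N' z i t).
Proof.
rewrite /= isFO_bigOr // all_map; apply/allP => i' _ /=.
by case: m0; rewrite isFO_R.
Qed.

Lemma isFO_subst Xs m0 N' z (f : form) : forall act, isFO f -> isFO (subst Xs m0 N' z act f).
Proof.
elim: f => [t1 t2|t1 t2|a t1|X t1|t1 t2 t3|t1 t2 t3|g IH|g IHg h IHh|g IHg h IHh|x g IH|x g IH|X g IH|X g IH|m t L Zs phi IH] act /=.
all: first [ done | (by case: ifP => // _; rewrite isFO_Th) | exact: IH | by move=> /andP[h1 h2]; rewrite IHg // IHh ].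
Qed.

Lemma FO_SOMQ m (f : form) : isFO f -> isSOMQ m f.
Proof.
elim: f => [t1 t2|t1 t2|a t1|X t1|t1 t2 t3|t1 t2 t3|g IH|g IHg h IHh|g IHg h IHh|x g IH|x g IH|X g IH|X g IH|m0 t L Zs phi IH] /=.
all: first [ done | exact: IH | by move=> /andP[h1 h2]; split; [apply: IHg | apply: IHh] ].
Qed.

Lemma SOMQ_subst m Xs m0 N' z (f : form) : forall act, isSOMQ m f -> isSOMQ m (subst Xs m0 N' z act f).
Proof.
elim: f => [t1 t2|t1 t2|a t1|X t1|t1 t2 t3|t1 t2 t3|g IH|g IHg h IHh|g IHg h IHh|x g IH|x g IH|X g IH|X g IH|m1 t L Zs phi IH] act /=.
all: try done. all: try exact: IH.
- by move=> _; case: ifP => // _; apply: FO_SOMQ; rewrite isFO_Th.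
- by move=> [h1 h2]; split; [exact: IHg | exact: IHh].
- by move=> [h1 h2]; split; [exact: IHg | exact: IHh].
- by move=> [h1 h2 h3 h4 h5]; split => // i; exact: (IH i _ (h5 i)).
Qed.

Lemma isFO_T m' (f : form) : isFO f -> isFO (T m' f).
Proof.
elim: f => [t1 t2|t1 t2|a t1|X t1|t1 t2 t3|t1 t2 t3|g IH|g IHg h IHh|g IHg h IHh|x g IH|x g IH|X g IH|X g IH|m0 t L Zs phi IH] /=.
all: first [ done | exact: IH | by move=> /andP[h1 h2]; rewrite IHg // IHh ].
Qed.

Lemma trq_other m : trq m (other m).
Proof. by case: m. Qed.

Lemma SOMQ_T m (f : form) : isSOMQ m f -> isSOMQ (other m) (T (other m) f).
Proof.
elim: f => [t1 t2|t1 t2|a t1|X t1|t1 t2 t3|t1 t2 t3|g IH|g IHg h IHh|g IHg h IHh|x g IH|x g IH|X g IH|X g IH|m0 t L Zs phi IH] /=.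
all: first [ done | exact: IH | (by move=> [h1 h2]; split; [apply: IHg | apply: IHh]) | by move=> [-> h2 h3 h4 h5]; rewrite /transQ trq_other /=; split => //; [exact: iota_uniq | by rewrite size_iota | by move=> i; apply: SOMQ_subst; apply: IH] ].
Qed.

Lemma QFO_T m (f : form) : isQFO m f -> isQFO (other m) (T (other m) f).
Proof.
case: f => //= m0 t L Zs phi [-> h2 h3 h4 h5]; rewrite /transQ trq_other /=; split => //.
+ exact: iota_uniq.
+ by rewrite size_iota.
+ by move=> i; apply: isFO_subst; apply: isFO_T.
Qed.

End Build.

Lemma dir (C : qmode -> forall s, form s -> Prop) m s (f : form s) :
  (forall f : form s, C m s f -> C (other m) s (T (other m) f)) ->
  C m s f -> sentence f ->
  exists g, [/\ C (other m) s g, sentence g &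
                forall w : seq 'I_s, 0 < size w -> models w f = models w g].
Proof.
move=> HC Hf Sf; exists (T (other m) f); split.
- exact: HC.
- exact: closed_T.
- by move=> w n0; rewrite /models sat_T.
Qed.

Lemma equivC (C : qmode -> forall s, form s -> Prop) m :
  (forall s (f : form s), C m s f -> C (other m) s (T (other m) f)) ->
  (forall s (f : form s), C (other m) s f -> C m s (T m f)) ->
  other (other m) = m ->
  equiv_logics (C m) (C (other m)).
Proof.
move=> H1 H2 oo s; split.
- move=> f Hf Sf; exact: (dir (H1 s) Hf Sf).
- move=> g Hg Sg.
  have H2' : forall f : form s, C (other m) s f -> C (other (other m)) s (T (other (other m)) f).
    by rewrite oo; apply: H2.
  have [f [Cf Sf E]] := dir H2' Hg Sg.
  rewrite oo in Cf.
  by exists f; split => // w n0; rewrite E.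
Qed.

Theorem theorem4p2 :
  equiv_logics (isQFO Interleaved) (isQFO Concatenated) /\
  equiv_logics (isSOMQ Interleaved) (isSOMQ Concatenated).
Proof.
split.
- apply: (equivC (C := isQFO) (m := Interleaved)) => //.
  + by move=> s f; apply: (QFO_T (m := Interleaved)).
  + by move=> s f; apply: (QFO_T (m := Concatenated)).
- apply: (equivC (C := isSOMQ) (m := Interleaved)) => //.
  + by move=> s f; apply: (SOMQ_T (m := Interleaved)).
  + by move=> s f; apply: (SOMQ_T (m := Concatenated)).
Qed.
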